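(* Let $H$ and $G$ be as in the construction described in the context. If $H$ is a solvable group of length $l$, then $G$ is a solvable group of length $l+2$.
   Context: Construction: $H$ is a group generated by a countable set $\{a^{(1)},a^{(2)},\ldots\}$. For groups $A,B$, the wreath product $A\,\mathrm{Wr}\,B$ is the semidirect product $A^B\rtimes B$, where $A^B$ is the group of all functions $B\to A$ with pointwise multiplication and $B$ acts by $(bf)(x)=f(xb)$. Let $Z=\langle z\rangle$ be infinite cyclic and let $b^{(i)}\in H^Z$ be given by $b^{(i)}(z^k)=a^{(i)}$ if $k>0$ and $b^{(i)}(z^k)=1$ otherwise. Let $K=\langle z,b^{(i)}\ (i\in\mathbb{N})\rangle\le H\,\mathrm{Wr}\,Z$. Let $\langle s\rangle$ be infinite cyclic and let $c\in K^{\langle s\rangle}$ be given by $c(s)=z$, $c(s^{2^i})=b^{(i)}$ for $i>0$, and $c(s^k)=1$ otherwise. Let $G=\langle c,s\rangle\le K\,\mathrm{Wr}\,\langle s\rangle$. *)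

(* Defs.v *)
From Stdlib Require Import ZArith Bool FunctionalExtensionality.
Open Scope Z_scope.

Record Group := {
  gcar :> Type;
  gmul : gcar -> gcar -> gcar;
  gone : gcar;
  ginv : gcar -> gcar;
  gassoc : forall x y z, gmul (gmul x y) z = gmul x (gmul y z);
  gid_l : forall x, gmul gone x = x;
  ginv_l : forall x, gmul (ginv x) x = gone }.

Arguments gmul {g} _ _.
Arguments gone {g}.
Arguments ginv {g} _.

Section Subgroups.
Variable T : Group.

Inductive gen (S : T -> Prop) : T -> Prop :=
| gen_in x : S x -> gen S x
| gen_one : gen S gone
| gen_mul x y : gen S x -> gen S y -> gen S (gmul x y)
| gen_inv x : gen S x -> gen S (ginv x).

Definition comm (x y : T) : T := gmul (gmul (ginv x) (ginv y)) (gmul x y).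

Definition commset (P : T -> Prop) : T -> Prop :=
  fun w => exists x y, P x /\ P y /\ w = comm x y.

Fixpoint derived (P : T -> Prop) (n : nat) : T -> Prop :=
  match n with
  | O => P
  | S m => gen (commset (derived P m))
  end.

Definition trivialset (P : T -> Prop) : Prop := forall x, P x -> x = gone.

Definition derived_length (P : T -> Prop) (l : nat) : Prop :=
  trivialset (derived P l) /\ (forall m, trivialset (derived P m) -> (l <= m)%nat).
End Subgroups.

Arguments gen {T} S _.
Arguments derived {T} P n _.
Arguments derived_length {T} P l.

(* Wreath product A Wr Z = A^Z ⋊ Z (all functions Z -> A), where Z acts by
   (b f)(x) = f(x b), i.e. (b.f)(x) = f(x + b) additively;
   (f,b)(g,b') = (f * (b.g), b + b'). *)
Section Wreath.
Variable A : Group.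
Definition wr_car : Type := ((Z -> A) * Z)%type.
Definition wr_mul (u v : wr_car) : wr_car :=
  (fun x => gmul (fst u x) (fst v (x + snd u)), snd u + snd v).
Definition wr_one : wr_car := (fun _ => gone, 0).
Definition wr_inv (u : wr_car) : wr_car :=
  (fun x => ginv (fst u (x - snd u)), - snd u).

Lemma wr_assoc x y z : wr_mul (wr_mul x y) z = wr_mul x (wr_mul y z).
Proof.
  destruct x as [f b], y as [g c], z as [h d]; unfold wr_mul; simpl.
  f_equal; [|ring]. apply functional_extensionality; intro t.
  rewrite gassoc, Z.add_assoc; reflexivity.
Qed.
Lemma wr_id_l x : wr_mul wr_one x = x.
Proof.
  destruct x as [f b]; unfold wr_mul, wr_one; simpl. f_equal.
  apply functional_extensionality; intro t. rewrite Z.add_0_r, gid_l; reflexivity.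
Qed.
Lemma wr_inv_l x : wr_mul (wr_inv x) x = wr_one.
Proof.
  destruct x as [f b]; unfold wr_mul, wr_inv, wr_one; simpl. f_equal; [|ring].
  apply functional_extensionality; intro t. apply ginv_l.
Qed.

Definition WrZ : Group := Build_Group wr_car wr_mul wr_one wr_inv wr_assoc wr_id_l wr_inv_l.
End Wreath.

Section Construction.
Variable H : Group.
Variable a : nat -> H.   (* a^(i) := a i, used for i >= 1 *)

Definition z_el : WrZ H := (fun _ => gone, 1).
Definition b_el (i : nat) : WrZ H := (fun k => if 0 <? k then a i else gone, 0).
Definition K_set : WrZ H -> Prop :=
  gen (fun x => x = z_el \/ exists i, (1 <= i)%nat /\ x = b_el i).

(* c(s) = z, c(s^(2^i)) = b^(i) for i > 0, c(s^k) = 1 otherwise *)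
Definition c_el : WrZ (WrZ H) :=
  (fun k => if k =? 1 then z_el
            else if (1 <? k) && (k =? 2 ^ Z.log2 k) then b_el (Z.to_nat (Z.log2 k))
            else gone, 0).
Definition s_el : WrZ (WrZ H) := (fun _ => gone, 1).

(* G = <c, s>, realized inside (H Wr Z) Wr <s>, which contains K Wr <s> *)
Definition G_set : WrZ (WrZ H) -> Prop := gen (fun x => x = c_el \/ x = s_el).
End Construction.

(* Main.v *)
Require Import Defs.
From Stdlib Require Import ZArith Lia FunctionalExtensionality.

Arguments gassoc {g} x y z.
Arguments gid_l {g} x.
Arguments ginv_l {g} x.

Section GroupFacts.
Variable T : Group.

Lemma ginv_r (x : T) : gmul x (ginv x) = gone.
Proof.
  rewrite <- (gid_l (gmul x (ginv x))).
  rewrite <- (ginv_l (ginv x)) at 1.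
  rewrite gassoc, <- (gassoc (ginv x) x (ginv x)), ginv_l, gid_l. apply ginv_l.
Qed.

Lemma gid_r (x : T) : gmul x gone = x.
Proof. rewrite <- (ginv_l x), <- gassoc, ginv_r, gid_l. reflexivity. Qed.

Lemma ginv_one : ginv (gone : T) = gone.
Proof. rewrite <- (gid_r (ginv gone)). apply ginv_l. Qed.

Lemma ginv_inv (x : T) : ginv (ginv x) = x.
Proof.
  rewrite <- (gid_r (ginv (ginv x))), <- (ginv_l x), <- gassoc, ginv_l, gid_l.
  reflexivity.
Qed.

Definition Closed (P : T -> Prop) :=
  P gone /\ (forall x y, P x -> P y -> P (gmul x y)) /\ (forall x, P x -> P (ginv x)).

Lemma gen_min (S Q : T -> Prop) : Closed Q -> (forall x, S x -> Q x) ->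
  forall x, gen S x -> Q x.
Proof. intros [h1 [h2 h3]] hS x hx; induction hx; auto. Qed.

Lemma gen_closed (S : T -> Prop) : Closed (gen S).
Proof. split; [apply gen_one | split; intros; [apply gen_mul | apply gen_inv]; auto]. Qed.

Lemma gen_mono (S Q : T -> Prop) : (forall x, S x -> Q x) -> forall x, gen S x -> gen Q x.
Proof. intros hS x hx; induction hx; [apply gen_in | apply gen_one | apply gen_mul | apply gen_inv]; auto. Qed.

Lemma comm_closed (Q : T -> Prop) x y : Closed Q -> Q x -> Q y -> Q (comm T x y).
Proof. intros [h1 [h2 h3]] hx hy; unfold comm; auto. Qed.

Lemma derived_in (B P : T -> Prop) : Closed B -> (forall x, P x -> B x) ->
  forall m x, derived P m x -> B x.
Proof.
  intros hB hP; induction m; simpl; auto.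
  intros x; apply gen_min; auto.
  intros w [a [b [ha [hb ->]]]]. apply comm_closed; auto.
Qed.

Lemma derived_mono (P Q : T -> Prop) : (forall x, P x -> Q x) ->
  forall m x, derived P m x -> derived Q m x.
Proof.
  intros hP; induction m; simpl; auto.
  intros x; apply gen_mono.
  intros w [a [b [ha [hb ->]]]]. exists a, b; auto.
Qed.

Lemma derived_decr (P : T -> Prop) : Closed P -> forall m x, derived P (S m) x -> derived P m x.
Proof.
  intros hP; induction m.
  - simpl. apply gen_min; auto. intros w [a [b [ha [hb ->]]]]. apply comm_closed; auto.
  - intros x. change (gen (commset T (derived P (S m))) x -> gen (commset T (derived P m)) x).
    apply gen_mono. intros w [a [b [ha [hb ->]]]]. exists a, b; auto.
Qed.

Lemma derived_decr_le (P : T -> Prop) : Closed P -> forall m n, (m <= n)%nat ->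
  forall x, derived P n x -> derived P m x.
Proof.
  intros hP m n hle; induction hle; auto.
  intros x hx. apply IHhle. apply derived_decr; auto.
Qed.

Lemma derived_comp (P : T -> Prop) n m : derived (derived P n) m = derived P (m + n).
Proof. induction m; simpl; [reflexivity | rewrite IHm; reflexivity]. Qed.

End GroupFacts.

Arguments Closed {T} P.

Section Hom.
Variables T1 T2 : Group.
Variable f : T1 -> T2.
Variable B : T1 -> Prop.
Hypothesis HB : Closed B.
Hypothesis fmul : forall x y, B x -> B y -> f (gmul x y) = gmul (f x) (f y).
Hypothesis finv : forall x, B x -> f (ginv x) = ginv (f x).
Hypothesis fone : f gone = gone.

Definition Im (P : T1 -> Prop) : T2 -> Prop := fun y => exists x, P x /\ y = f x.

Lemma Im_closed P : Closed P -> (forall x, P x -> B x) -> Closed (Im P).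
Proof.
  intros [h1 [h2 h3]] hP. split; [|split].
  - exists gone; split; [auto | rewrite fone; reflexivity].
  - intros x y [a [ha ->]] [b [hb ->]]. exists (gmul a b); split; [auto | rewrite fmul; auto].
  - intros x [a [ha ->]]. exists (ginv a); split; [auto | rewrite finv; auto].
Qed.

Lemma f_comm x y : B x -> B y -> f (comm T1 x y) = comm T2 (f x) (f y).
Proof.
  destruct HB as [h1 [h2 h3]]. intros hx hy. unfold comm.
  rewrite fmul, fmul, fmul, finv, finv; auto.
Qed.

Lemma derived_Im P : (forall x, P x -> B x) ->
  forall m y, derived (Im P) m y -> Im (derived P m) y.
Proof.
  intros hP; induction m; simpl; auto.
  assert (hD : forall x, derived P m x -> B x) by (apply derived_in; auto).
  apply gen_min.
  - apply Im_closed. apply gen_closed. apply gen_min; auto.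
    intros w [a [b [ha [hb ->]]]]. apply comm_closed; auto.
  - intros w [a [b [ha [hb ->]]]].
    destruct (IHm a ha) as [a' [ha' ->]]. destruct (IHm b hb) as [b' [hb' ->]].
    exists (comm T1 a' b'). split.
    + apply gen_in. exists a', b'; auto.
    + rewrite f_comm; auto.
Qed.
End Hom.

Section Wreath.
Variable A : Group.
Notation W := (WrZ A).

Definition Base (Q : A -> Prop) : W -> Prop := fun u => snd u = 0%Z /\ forall x, Q (fst u x).
Definition All (Q : A -> Prop) : W -> Prop := fun u => forall x, Q (fst u x).


Lemma Base_closed Q : Closed Q -> Closed (Base Q).
Proof.
  intros [h1 [h2 h3]]. split; [|split].
  - split; simpl; auto.
  - intros [f b] [g c] [hb hf] [hc hg]; simpl in *; subst. split; simpl; auto.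
  - intros [f b] [hb hf]; simpl in *; subst. split; simpl; auto.
Qed.

Lemma All_closed Q : Closed Q -> Closed (All Q).
Proof.
  intros [h1 [h2 h3]]. split; [|split].
  - intro x; simpl; auto.
  - intros [f b] [g c] hf hg; intro x; simpl in *; auto.
  - intros [f b] hf; intro x; simpl in *; auto.
Qed.

Lemma snd_comm (u v : W) : snd (comm W u v) = 0%Z.
Proof. destruct u as [f b], v as [g c]; simpl. ring. Qed.

Lemma commset_Base (P : W -> Prop) Q : Closed Q -> (forall u, P u -> All Q u) ->
  forall u, commset W P u -> Base Q u.
Proof.
  intros hQ hP u [x [y [hx [hy ->]]]]. split; [apply snd_comm|].
  pose proof (All_closed Q hQ) as hA.
  apply (comm_closed W (All Q)); auto.
Qed.

Lemma fst_comm0 (f g : Z -> A) w :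
  fst (comm W ((f, 0%Z) : W) ((g, 0%Z) : W)) w = comm A (f w) (g w).
Proof.
  simpl. rewrite ?Z.sub_0_r, ?Z.add_0_r. reflexivity.
Qed.

Lemma commset_Base2 (P : W -> Prop) Q : (forall u, P u -> Base Q u) ->
  forall u, commset W P u -> Base (commset A Q) u.
Proof.
  intros hP u [x [y [hx [hy ->]]]]. split; [apply snd_comm|].
  destruct (hP x hx) as [hx0 hxv], (hP y hy) as [hy0 hyv].
  destruct x as [f b], y as [g c]; simpl in hx0, hy0; subst.
  intro w. rewrite fst_comm0. exists (f w), (g w); simpl in *; auto.
Qed.

Lemma derived_Base (P : W -> Prop) Q : Closed Q -> (forall u, P u -> All Q u) ->
  forall m u, derived P (S m) u -> Base (derived Q m) u.
Proof.
  intros hQ hP; induction m.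
  - simpl. apply (gen_min W). apply Base_closed; auto. apply commset_Base; auto.
  - intros u hu. change (gen (commset W (derived P (S m))) u) in hu.
    revert u hu. apply (gen_min W).
    + apply Base_closed. apply (gen_closed A).
    + intros u hu. destruct (commset_Base2 _ _ IHm u hu) as [h0 hv].
      split; auto. intro x. apply gen_in. apply hv.
Qed.

Lemma ev_mul x (u v : W) : snd u = 0%Z -> fst (gmul u v) x = gmul (fst u x) (fst v x).
Proof. destruct u as [f b]; simpl; intros ->. rewrite Z.add_0_r; reflexivity. Qed.

Lemma ev_inv x (u : W) : snd u = 0%Z -> fst (ginv u) x = ginv (fst u x).
Proof. destruct u as [f b]; simpl; intros ->. rewrite Z.sub_0_r; reflexivity. Qed.

Lemma zero_closed : Closed (fun u : W => snd u = 0%Z).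
Proof.
  split; [|split]; [reflexivity| intros [f b] [g c]; simpl; intros -> ->; reflexivity
   | intros [f b]; simpl; intros ->; reflexivity].
Qed.

Lemma fst_comm_shift (g : Z -> A) n w :
  fst (comm W ((g, 0%Z) : W) ((fun _ => gone, n) : W)) w = gmul (ginv (g w)) (g (w - n)%Z).
Proof.
  simpl. rewrite ginv_one, !gid_r, Z.sub_0_r. f_equal; f_equal; ring.
Qed.

Lemma shift_in (Q : W -> Prop) : Closed Q -> Q ((fun _ => gone, 1%Z) : W) ->
  forall n, Q ((fun _ => gone, n) : W).
Proof.
  intros [h1 [h2 h3]] h.
  assert (hp : forall k : nat, Q ((fun _ => gone, Z.of_nat k) : W)).
  { induction k.
    - exact h1.
    - replace ((fun _ => gone, Z.of_nat (S k)) : W) with (gmul ((fun _ => gone, Z.of_nat k) : W) ((fun _ => gone, 1%Z) : W)); auto.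
      apply injective_projections; simpl; [apply functional_extensionality; intro; apply gid_l | lia]. }
  intro n. destruct (Z_le_gt_dec 0 n).
  - rewrite <- (Z2Nat.id n); auto.
  - replace ((fun _ => gone, n) : W) with (ginv ((fun _ => gone, Z.of_nat (Z.to_nat (- n))) : W)); auto.
    apply injective_projections; simpl; [apply functional_extensionality; intro; apply ginv_one | lia].
Qed.

End Wreath.

From Stdlib Require Import Classical.

Lemma comm_zero (T : Group) (S : T -> Prop) (B : T -> Prop) :
  Closed B -> (forall x y, B (comm T x y)) -> forall u, gen (commset T S) u -> B u.
Proof.
  intros hB hc. apply gen_min; auto. intros w [x [y [_ [_ ->]]]]. apply hc.
Qed.

Lemma K_closed (H : Group) (a : nat -> H) : Closed (K_set H a).
Proof. apply gen_closed. Qed.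

Lemma G_closed (H : Group) (a : nat -> H) : Closed (G_set H a).
Proof. apply gen_closed. Qed.

Lemma True_closed (T : Group) : Closed (fun _ : T => True).
Proof. repeat split. Qed.

Lemma K_up (H : Group) (a : nat -> H) l :
  trivialset H (derived (fun _ : H => True) l) -> trivialset (WrZ H) (derived (K_set H a) (S l)).
Proof.
  intros ht u hu.
  destruct (derived_Base H (K_set H a) (fun _ => True) (True_closed H) (fun u _ x => I) l u hu)
    as [h0 hv].
  destruct u as [f b]; simpl in *. subst.
  change (gone : WrZ H) with (wr_one H). unfold wr_one.
  apply injective_projections; simpl; [|reflexivity].
  apply functional_extensionality; intro x; apply ht; apply hv.
Qed.

Lemma c_pow (H : Group) (a : nat -> H) (i : nat) : (1 <= i)%nat ->
  fst (c_el H a) (2 ^ Z.of_nat i)%Z = b_el H a i.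
Proof.
  intro hi. assert (h2 : (2 ^ 1 <= 2 ^ Z.of_nat i)%Z) by (apply Z.pow_le_mono_r; lia).
  simpl in h2. unfold c_el; simpl fst.
  rewrite (proj2 (Z.eqb_neq _ _)) by lia.
  rewrite (proj2 (Z.ltb_lt _ _)) by lia.
  rewrite Z.log2_pow2 by lia. rewrite Z.eqb_refl, Nat2Z.id. reflexivity.
Qed.

Lemma G_all (H : Group) (a : nat -> H) : forall u, G_set H a u -> All (WrZ H) (K_set H a) u.
Proof.
  apply gen_min. apply All_closed. apply K_closed.
  intros u [-> | ->]; intro k; simpl.
  - destruct (k =? 1)%Z. { apply gen_in. left; reflexivity. }
    destruct (andb (1 <? k)%Z (k =? 2 ^ Z.log2 k)%Z) eqn:E; [|apply gen_one].
    apply gen_in. right. exists (Z.to_nat (Z.log2 k)). split; [|reflexivity].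
    apply andb_prop in E. destruct E as [E _]. apply Z.ltb_lt in E.
    assert (h1 : (Z.log2 2 <= Z.log2 k)%Z) by (apply Z.log2_le_mono; lia).
    simpl in h1. lia.
  - apply gen_one.
Qed.

Lemma K_low (H : Group) (a : nat -> H)
  (Hgen : forall x : H, gen (fun y => exists i, (1 <= i)%nat /\ y = a i) x) l h :
  derived (fun _ : H => True) l h -> h <> gone ->
  exists u, derived (K_set H a) (S l) u /\ u <> gone.
Proof.
  intros hh hne.
  set (f := fun u : WrZ H => fst u 0%Z).
  set (B := fun u : WrZ H => snd u = 0%Z).
  set (P := derived (K_set H a) 1).
  assert (hB : Closed B) by apply zero_closed.
  assert (fm : forall x y, B x -> B y -> f (gmul x y) = gmul (f x) (f y))
    by (intros; apply ev_mul; auto).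
  assert (fi : forall x, B x -> f (ginv x) = ginv (f x)) by (intros; apply ev_inv; auto).
  assert (fo : f gone = gone) by reflexivity.
  assert (hPB : forall x, P x -> B x).
  { apply comm_zero; auto. intros; apply snd_comm. }
  assert (hIm : forall h, Im _ _ f P h).
  { intro h0. refine (gen_min H _ _ _ _ h0 (Hgen h0)).

    - apply Im_closed with (B := B); auto. apply gen_closed.
    - intros y [i [hi ->]].
      exists (comm _ (b_el H a i) ((fun _ => gone, (-1)%Z) : WrZ H)). split.
      + apply gen_in. exists (b_el H a i), ((fun _ => gone, (-1)%Z) : WrZ H).
        split; [apply gen_in; right; exists i; auto|]. split; [|reflexivity].
        apply shift_in. apply K_closed. apply gen_in; left; reflexivity.
      + unfold f, b_el. rewrite fst_comm_shift. simpl. rewrite ginv_one, gid_l. reflexivity. }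
  assert (hd := derived_Im _ _ f B hB fm fi fo P hPB l h
     (derived_mono _ _ _ (fun x _ => hIm x) l h hh)).
  destruct hd as [u [hu ->]].
  exists u. unfold P in hu. rewrite derived_comp in hu. rewrite Nat.add_1_r in hu.
  split; auto. intros ->. apply hne. reflexivity.
Qed.

Lemma G_low (H : Group) (a : nat -> H) l x :
  derived (K_set H a) l x -> x <> gone ->
  exists u, derived (G_set H a) (S l) u /\ u <> gone.
Proof.
  intros hh hne.
  set (f := fun u : WrZ (WrZ H) => fst u 1%Z).
  set (B := fun u : WrZ (WrZ H) => snd u = 0%Z).
  set (P := derived (G_set H a) 1).
  assert (hB : Closed B) by apply zero_closed.
  assert (fm : forall x y, B x -> B y -> f (gmul x y) = gmul (f x) (f y))
    by (intros; apply ev_mul; auto).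
  assert (fi : forall x, B x -> f (ginv x) = ginv (f x)) by (intros; apply ev_inv; auto).
  assert (fo : f gone = gone) by reflexivity.
  assert (hPB : forall x, P x -> B x).
  { apply comm_zero; auto. intros; apply snd_comm. }
  assert (hIc : Closed (Im _ _ f P)).
  { apply Im_closed with (B := B); auto. apply gen_closed. }
  assert (hsh : forall n, Im _ _ f P (gmul (ginv (z_el H)) (fst (c_el H a) (1 - n)%Z))).
  { intro n. exists (comm _ (c_el H a) ((fun _ => gone, n) : WrZ (WrZ H))). split.
    + apply gen_in. exists (c_el H a), ((fun _ => gone, n) : WrZ (WrZ H)).
      split; [apply gen_in; left; auto|]. split; [|reflexivity].
      apply shift_in. apply G_closed. apply gen_in; right; reflexivity.
    + exact (eq_sym (fst_comm_shift (WrZ H) (fst (c_el H a)) n 1%Z)). }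
  assert (hz : Im _ _ f P (z_el H)).
  { destruct hIc as [_ [_ h3]]. rewrite <- (ginv_inv _ (z_el H)). apply h3.
    rewrite <- (gid_r _ (ginv (z_el H))). apply (hsh 1%Z). }
  assert (hIm : forall y, K_set H a y -> Im _ _ f P y).
  { apply gen_min; auto.
    intros y [-> | [i [hi ->]]]; auto.
    rewrite <- (gid_l (b_el H a i)), <- (ginv_r _ (z_el H)), gassoc.
    destruct hIc as [_ [h2 _]]. apply h2; auto.
    rewrite <- (c_pow H a i hi). replace (2 ^ Z.of_nat i)%Z with (1 - (1 - 2 ^ Z.of_nat i))%Z by ring.
    apply hsh. }
  assert (hd := derived_Im _ _ f B hB fm fi fo P hPB l x
     (derived_mono _ _ _ hIm l x hh)).
  destruct hd as [u [hu ->]].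
  exists u. unfold P in hu. rewrite derived_comp in hu. rewrite Nat.add_1_r in hu.
  split; auto. intros ->. apply hne. reflexivity.
Qed.

Theorem corollary2 (H : Group) (a : nat -> H) (l : nat)
  (Hgen : forall x : H, gen (fun y => exists i, (1 <= i)%nat /\ y = a i) x)
  (Hsolv : derived_length (fun _ : H => True) l) :
  derived_length (G_set H a) (l + 2).
Proof.
  destruct Hsolv as [Ht Hmin]. split.
  - replace (l + 2)%nat with (S (S l)) by lia.
    intros u hu.
    destruct (derived_Base (WrZ H) (G_set H a) (K_set H a) (K_closed H a) (G_all H a) (S l) u hu)
      as [h0 hv].
    destruct u as [f b]; simpl in *. subst.
    change (gone : WrZ (WrZ H)) with (wr_one (WrZ H)). unfold wr_one.
    apply injective_projections; simpl; [|reflexivity].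
    apply functional_extensionality; intro x. apply (K_up H a l Ht). apply hv.
  - assert (hK : exists x, derived (K_set H a) l x /\ x <> gone).
    { destruct l as [|l'].
      - exists (z_el H). split; [apply gen_in; left; reflexivity|].
        intro e. apply (f_equal snd) in e. simpl in e. discriminate.
      - assert (hn : ~ trivialset H (derived (fun _ : H => True) l')).
        { intro ht. specialize (Hmin l' ht). lia. }
        apply not_all_ex_not in hn. destruct hn as [h hn].
        apply imply_to_and in hn. destruct hn as [hh hne].
        apply (K_low H a Hgen l' h hh hne). }
    destruct hK as [x [hx hxne]].
    destruct (G_low H a l x hx hxne) as [u [hu hune]].
    intros m ht. destruct (le_lt_dec (l + 2) m) as [hle | hlt]; auto.
    exfalso. apply hune. apply ht.
    apply (derived_decr_le _ _ (G_closed H a) m (S l)); [lia | auto].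
Qed.
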